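(* Let $(X,\wedge,\vee,\bot,\top)$ be a bounded distributive lattice, let $n\ge 1$, and let $x=(x_1,\ldots,x_n)$ be a sequence of elements of $X$. For $0\le m\le n$ and $0\le k\le m+1$ define $$P_m(k)=\begin{cases}\bot & k=0,\\ \bigwedge_{I\subseteq\{1,\ldots,m\},\ |I|=k}\ \bigvee_{i\in I} x_i & 1\le k\le m,\\ \top & k=m+1.\end{cases}$$ Then for every $k$ with $1\le k\le n$, $$P_n(k)=P_{n-1}(k)\wedge\bigl(P_{n-1}(k-1)\vee x_n\bigr).$$
   Context: For $1\le k\le m$, $P_m(k)$ is the $k$-th element of the sequence $(x_1,\ldots,x_m)$ ''sorted with respect to the lattice'', i.e. the meet, over all $k$-element subsets $I$ of $\{1,\ldots,m\}$, of the join of the $x_i$ with $i\in I$. Here $\bot$ is the least and $\top$ the greatest element of $X$. *)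

(* Defs.v *)
From HB Require Import structures.
From mathcomp Require Import all_boot all_order.
Set Implicit Arguments. Unset Strict Implicit. Unset Printing Implicit Defensive.
Import Order.TTheory.
Local Open Scope order_scope.

(* P x m k for a sequence x_1, x_2, ... given as a function x : nat -> X,
   indexed from 1 (x 0 is never used).  The index set {1,..,m} is 'I_m,
   with i : 'I_m standing for the index i+1. *)
Definition P {d : Order.disp_t} {X : tbDistrLatticeType d}
    (x : nat -> X) (m k : nat) : X :=
  if k == 0 then \bot
  else if k <= m then
    \meet_(I : {set 'I_m} | #|I| == k) \join_(i in I) x i.+1
  else \top.

(* Main.v *)
Require Import Defs.
From HB Require Import structures.
From mathcomp Require Import all_boot all_order.
Import Order.TTheory.
Local Open Scope order_scope.

Section S.
Context {d : Order.disp_t} {X : tbDistrLatticeType d} (x : nat -> X).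

Definition Q (m k : nat) : X :=
  \meet_(I : {set 'I_m} | #|I| == k) \join_(i in I) x i.+1.

Lemma PQ m k : P x m k = Q m k.
Proof.
rewrite /P /Q; case: eqP => [->|k0].
  rewrite (big_pred1 set0); first by rewrite big_set0.
  by move=> I; rewrite /= cards_eq0.
case: ifP => // hk; rewrite big_pred0 // => I.
apply/negbTE; apply/eqP=> e; have := max_card (mem I).
by rewrite card_ord -/(#|I|) e; move/negbT: hk => /negP; apply.
Qed.

Lemma joinx_bigmeet (I : finType) (Pr : pred I) (F : I -> X) (a : X) :
  (\meet_(i | Pr i) F i) `|` a = \meet_(i | Pr i) (F i `|` a).
Proof.
apply: (big_morph (fun b => b `|` a)) => [u v|]; first by rewrite joinIl.
by rewrite join1x.
Qed.

Lemma Qrec m k : (1 <= k)%N -> Q m.+1 k = Q m k `&` (Q m k.-1 `|` x m.+1).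
Proof.
move=> k1.
pose w := widen_ord (leqnSn m).
have winj : injective w by move=> a b /(congr1 val) /= /val_inj.
have wmax j : w j != ord_max by rewrite -val_eqE /= neq_ltn ltn_ord.
pose h' (I : {set 'I_m.+1}) := [set j : 'I_m | w j \in I].
have wK (i : 'I_m.+1) : i != ord_max -> exists j, i = w j.
  move=> ne; have lt : (i < m)%N.
    by rewrite ltn_neqAle -ltnS ltn_ord andbT; move: ne; rewrite -val_eqE.
  by exists (Ordinal lt); apply: val_inj.
rewrite /Q (bigID (fun I : {set 'I_m.+1} => ord_max \notin I)) /=; congr (_ `&` _).
  rewrite (reindex_onto (fun J : {set 'I_m} => w @: J) h'); last first.
    move=> I /andP[_ nI]; apply/setP=> i; apply/imsetP/idP.
      by case=> j; rewrite inE => ? ->.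
    move=> iI; have ne : i != ord_max by apply: contraNneq nI => <-.
    by have [j e] := wK i ne; exists j; rewrite // inE -e.
  apply: eq_big => J.
    rewrite card_imset //; case: (#|J| == k) => //=.
    have -> : ord_max \notin w @: J.
      by apply/imsetP=> -[j _ e]; move: (wmax j); rewrite -e eqxx.
    by apply/eqP/setP=> j; rewrite inE mem_imset.
  by move=> _; rewrite big_imset //= => a b _ _; exact: winj.
rewrite joinx_bigmeet.
rewrite (reindex_onto (fun J : {set 'I_m} => ord_max |: (w @: J)) h'); last first.
  move=> I /andP[_ nI]; rewrite negbK in nI; apply/setP=> i; rewrite !inE.
  case: (eqVneq i ord_max) => [->|ne] /=; first by rewrite nI.
  apply/imsetP/idP; first by case=> j; rewrite inE => ? ->.
  by move=> iI; have [j e] := wK i ne; exists j; rewrite -?e // inE -e.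
have nm J : ord_max \notin w @: J.
  by apply/imsetP=> -[j _ e]; move: (wmax j); rewrite -e eqxx.
apply: eq_big => J.
  rewrite cardsU1 nm card_imset //= setU11 /=.
  have -> : h' (ord_max |: w @: J) == J.
    apply/eqP/setP=> j; rewrite !inE mem_imset // orbC.
    by case: (j \in J) => //=; rewrite (negbTE (wmax j)).
  rewrite add1n -{1}(prednK k1) eqSS; by case: (_ == _).
move=> _; rewrite big_setU1 //= big_imset /=; last by move=> a b _ _; exact: winj.
by rewrite joinC.
Qed.
End S.

Theorem proposition3p1 (d : Order.disp_t) (X : tbDistrLatticeType d)
    (n : nat) (x : nat -> X) :
  (1 <= n)%N ->
  forall k : nat, (1 <= k <= n)%N ->
    P x n k = P x n.-1 k `&` (P x n.-1 k.-1 `|` x n).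
Proof.
case: n => // m _ k /andP[k1 _]; rewrite !PQ /=; exact: Qrec.
Qed.
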